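(* Let $S\subset\mathbb{Z}^d$ be a finite set, $\mathcal{P}=\{P_\alpha\}_{\alpha\in S}$ a resolution of unity on $\mathbb{C}^D$ and $C$ a $D\times D$ unitary matrix. If $U(S,\mathcal{P},C)$ has an eigenvalue, then there exist a nonzero vector $\phi\in\mathbb{C}^D$ and a point $x_o\in\mathbb{Z}^d$ such that $\limsup_{n\to\infty}p_n(\phi;x_o)>0$.
   Context: A resolution of unity on $\mathbb{C}^D$ indexed by a finite $S\subset\mathbb{Z}^d$ is a family of orthogonal projections $P_\alpha$ with $P_\alpha P_\beta=0$ for $\alpha\ne\beta$ and $\sum_{\alpha\in S}P_\alpha=I$. For $\alpha\in\mathbb{Z}^d$, $\tau^\alpha$ acts on $\ell^2(\mathbb{Z}^d,\mathbb{C}^D)$ by $(\tau^\alpha f)(x)=f(x-\alpha)$. $U(S,\mathcal{P},C)=\big(\sum_{\alpha\in S}\tau^\alpha P_\alpha\big)C$, with $C$ acting pointwise. $\delta_0\otimes\phi$ is the function equal to $\phi$ at $0$ and $0$ elsewhere and $p_n(\phi;x)=\|U(S,\mathcal{P},C)^n(\delta_0\otimes\phi)(x)\|^2_{\mathbb{C}^D}$. Eigenvalue means an element of the point spectrum. *)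

(* Defs.v *)
From Stdlib Require Import Reals List ZArith.
Open Scope R_scope.

Definition Cx : Type := (R * R)%type.
Definition C0 : Cx := (0, 0).
Definition C1 : Cx := (1, 0).
Definition Cadd (z w : Cx) : Cx := (fst z + fst w, snd z + snd w).
Definition Cmul (z w : Cx) : Cx :=
  (fst z * fst w - snd z * snd w, fst z * snd w + snd z * fst w).
Definition Cconj (z : Cx) : Cx := (fst z, - snd z).
Definition Cnorm2 (z : Cx) : R := fst z * fst z + snd z * snd z.

Fixpoint Csum (n : nat) (f : nat -> Cx) : Cx :=
  match n with O => C0 | S k => Cadd (Csum k f) (f k) end.
Fixpoint Rsum (n : nat) (f : nat -> R) : R :=
  match n with O => 0 | S k => Rsum k f + f k end.

(* ---------- vectors in C^D and D x D matrices (entries with index < D matter) *)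
Definition vec : Type := nat -> Cx.
Definition mat : Type := nat -> nat -> Cx.
Definition vzero : vec := fun _ => C0.
Definition vadd (u v : vec) : vec := fun i => Cadd (u i) (v i).
Definition mzero : mat := fun _ _ => C0.
Definition madd (A B : mat) : mat := fun i j => Cadd (A i j) (B i j).
Definition idmat : mat := fun i j => if Nat.eqb i j then C1 else C0.
Definition mat_mul (D : nat) (A B : mat) : mat :=
  fun i j => Csum D (fun k => Cmul (A i k) (B k j)).
Definition mat_vec (D : nat) (A : mat) (v : vec) : vec :=
  fun i => Csum D (fun k => Cmul (A i k) (v k)).
Definition adjoint (A : mat) : mat := fun i j => Cconj (A j i).
Definition mat_eq (D : nat) (A B : mat) : Prop :=
  forall i j, (i < D)%nat -> (j < D)%nat -> A i j = B i j.
Definition vnorm2 (D : nat) (v : vec) : R := Rsum D (fun i => Cnorm2 (v i)).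
Definition vnonzero (D : nat) (v : vec) : Prop := exists i, (i < D)%nat /\ v i <> C0.

Definition unitary (D : nat) (U : mat) : Prop :=
  mat_eq D (mat_mul D (adjoint U) U) idmat /\ mat_eq D (mat_mul D U (adjoint U)) idmat.

Definition pt : Type := list Z.
Definition is_pt (d : nat) (x : pt) : Prop := length x = d.
Fixpoint zsub (x y : pt) : pt :=
  match x, y with
  | a :: x', b :: y' => (a - b)%Z :: zsub x' y'
  | _, _ => nil
  end.
Definition origin (d : nat) : pt := repeat 0%Z d.

Definition finite_subset (d : nat) (S : list pt) : Prop :=
  NoDup S /\ Forall (is_pt d) S.

Definition msum_list (S : list pt) (P : pt -> mat) : mat :=
  fold_right (fun a M => madd (P a) M) mzero S.

Definition is_resolution (D : nat) (S : list pt) (P : pt -> mat) : Prop :=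
  (forall a, In a S ->
     mat_eq D (mat_mul D (P a) (P a)) (P a) /\ mat_eq D (adjoint (P a)) (P a)) /\
  (forall a b, In a S -> In b S -> a <> b -> mat_eq D (mat_mul D (P a) (P b)) mzero) /\
  mat_eq D (msum_list S P) idmat.

Definition field : Type := pt -> vec.

Definition vsum_list (S : list pt) (g : pt -> vec) : vec :=
  fold_right (fun a v => vadd (g a) v) vzero S.

Definition U_op (D : nat) (S : list pt) (P : pt -> mat) (Cm : mat) (f : field) : field :=
  fun x => vsum_list S (fun a => mat_vec D (P a) (mat_vec D Cm (f (zsub x a)))).

Definition Rsum_list (xs : list pt) (g : pt -> R) : R :=
  fold_right (fun x r => g x + r) 0 xs.

Definition in_l2 (d D : nat) (f : field) : Prop :=
  exists M : R, forall xs : list pt, NoDup xs -> Forall (is_pt d) xs ->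
    Rsum_list xs (fun x => vnorm2 D (f x)) <= M.

Definition field_nonzero (d D : nat) (f : field) : Prop :=
  exists x, is_pt d x /\ vnonzero D (f x).

Definition is_eigenvalue (d D : nat) (S : list pt) (P : pt -> mat) (Cm : mat) (lam : Cx) : Prop :=
  exists f : field, in_l2 d D f /\ field_nonzero d D f /\
    forall x, is_pt d x -> forall i, (i < D)%nat ->
      U_op D S P Cm f x i = Cmul lam (f x i).

Definition delta0 (d : nat) (phi : vec) : field :=
  fun x => if list_eq_dec Z.eq_dec x (origin d) then phi else vzero.

Definition p_n (d D : nat) (S : list pt) (P : pt -> mat) (Cm : mat)
  (n : nat) (phi : vec) (x : pt) : R :=
  vnorm2 D (Nat.iter n (U_op D S P Cm) (delta0 d phi) x).

(* limsup_{n -> oo} u n > 0, unfolded: some eps > 0 is exceeded infinitely often *)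
Definition limsup_pos (u : nat -> R) : Prop :=
  exists eps, 0 < eps /\ forall N : nat, exists n, (N <= n)%nat /\ eps <= u n.

(* Main.v *)
Require Import Defs.
From Stdlib Require Import Reals List ZArith Lra Lia Classical Permutation.
Open Scope R_scope.

Lemma Rsum_ext n f g : (forall i, (i < n)%nat -> f i = g i) -> Rsum n f = Rsum n g.
Proof. induction n; simpl; intros H; auto. rewrite IHn by (intros; apply H; lia). rewrite H by lia. auto. Qed.
Lemma Rsum_plus n f g : Rsum n (fun i => f i + g i) = Rsum n f + Rsum n g.
Proof. induction n; simpl; [lra|rewrite IHn; lra]. Qed.
Lemma Rsum_scal n c f : Rsum n (fun i => c * f i) = c * Rsum n f.
Proof. induction n; simpl; [lra|rewrite IHn; lra]. Qed.
Lemma Rsum_zero n f : (forall i, (i < n)%nat -> f i = 0) -> Rsum n f = 0.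
Proof. intros H. rewrite (Rsum_ext n f (fun _ => 0)) by auto. induction n; simpl; auto; rewrite IHn; [lra|intros; apply H; lia]. Qed.
Lemma Rsum_le n f g : (forall i, (i < n)%nat -> f i <= g i) -> Rsum n f <= Rsum n g.
Proof. induction n; simpl; intros H; [lra|]. assert (f n <= g n) by (apply H; lia). assert (Rsum n f <= Rsum n g) by (apply IHn; intros; apply H; lia). lra. Qed.
Lemma Rsum_nonneg n f : (forall i, (i < n)%nat -> 0 <= f i) -> 0 <= Rsum n f.
Proof. intros H. replace 0 with (Rsum n (fun _ => 0)) at 1 by (apply Rsum_zero; auto). apply Rsum_le; auto. Qed.
Lemma Rsum_exchange n m F : Rsum n (fun i => Rsum m (fun k => F i k)) = Rsum m (fun k => Rsum n (fun i => F i k)).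
Proof. induction n; simpl. - symmetry; apply Rsum_zero; auto. - rewrite IHn. rewrite <- Rsum_plus. auto. Qed.
Lemma fst_Csum n f : fst (Csum n f) = Rsum n (fun k => fst (f k)).
Proof. induction n; simpl; auto. rewrite IHn; auto. Qed.
Lemma snd_Csum n f : snd (Csum n f) = Rsum n (fun k => snd (f k)).
Proof. induction n; simpl; auto. rewrite IHn; auto. Qed.
Lemma Cx_eq (z w : Cx) : fst z = fst w -> snd z = snd w -> z = w.
Proof. destruct z, w; simpl; intros; subst; auto. Qed.
Lemma Rsum_single n f j : (j < n)%nat -> (forall i, (i < n)%nat -> i <> j -> f i = 0) -> Rsum n f = f j.
Proof.
  induction n; intros Hj H; [lia|simpl]. destruct (Nat.eq_dec j n).
  - subst. rewrite Rsum_zero; [lra|]. intros; apply H; lia.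
  - rewrite IHn by (try lia; intros; apply H; lia). rewrite (H n) by lia. lra.
Qed.

Lemma RL_app l1 l2 g : Rsum_list (l1 ++ l2) g = Rsum_list l1 g + Rsum_list l2 g.
Proof. induction l1; simpl; [lra|rewrite IHl1; lra]. Qed.
Lemma RL_plus l f g : Rsum_list l (fun x => f x + g x) = Rsum_list l f + Rsum_list l g.
Proof. induction l; simpl; [lra|rewrite IHl; lra]. Qed.
Lemma RL_scal l c f : Rsum_list l (fun x => c * f x) = c * Rsum_list l f.
Proof. induction l; simpl; [lra|rewrite IHl; lra]. Qed.
Lemma RL_ext l f g : (forall x, In x l -> f x = g x) -> Rsum_list l f = Rsum_list l g.
Proof. induction l; simpl; intros H; auto. rewrite H, IHl; auto. Qed.
Lemma RL_zero l f : (forall x, In x l -> f x = 0) -> Rsum_list l f = 0.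
Proof. induction l; simpl; intros H; auto. rewrite H, IHl; auto; lra. Qed.
Lemma RL_le l f g : (forall x, In x l -> f x <= g x) -> Rsum_list l f <= Rsum_list l g.
Proof. induction l; simpl; intros H; [lra|]. assert (f a <= g a) by auto. assert (Rsum_list l f <= Rsum_list l g) by auto. lra. Qed.
Lemma RL_nonneg l f : (forall x, In x l -> 0 <= f x) -> 0 <= Rsum_list l f.
Proof. intros H. replace 0 with (Rsum_list l (fun _ => 0)) at 1 by (apply RL_zero; auto). apply RL_le; auto. Qed.
Lemma RL_map l (t : pt -> pt) f : Rsum_list (map t l) f = Rsum_list l (fun x => f (t x)).
Proof. induction l; simpl; auto. rewrite IHl; auto. Qed.
Lemma RL_exchange l1 l2 F : Rsum_list l1 (fun x => Rsum_list l2 (fun y => F x y)) = Rsum_list l2 (fun y => Rsum_list l1 (fun x => F x y)).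
Proof. induction l1; simpl. - symmetry; apply RL_zero; auto. - rewrite IHl1, <- RL_plus. auto. Qed.
Lemma RL_Rsum l n F : Rsum_list l (fun x => Rsum n (fun i => F x i)) = Rsum n (fun i => Rsum_list l (fun x => F x i)).
Proof. induction l; simpl. - symmetry; apply Rsum_zero; auto. - rewrite IHl, <- Rsum_plus. auto. Qed.
Lemma RL_single l f a : NoDup l -> In a l -> (forall x, In x l -> x <> a -> f x = 0) -> Rsum_list l f = f a.
Proof.
  induction l; simpl; intros Hn Ha H; [contradiction|]. inversion Hn; subst.
  destruct Ha as [<-|Ha].
  - rewrite RL_zero; [lra|]. intros x Hx; apply H; auto. intro; subst; contradiction.
  - rewrite IHl; auto. rewrite H; auto; [lra|]. intro; subst; contradiction.
Qed.

Definition ptdec : forall x y : pt, {x = y} + {x <> y} := list_eq_dec Z.eq_dec.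

Lemma RL_filter l f (p : pt -> bool) : (forall x, In x l -> p x = false -> f x = 0) ->
  Rsum_list l f = Rsum_list (filter p l) f.
Proof. induction l; simpl; intros H; auto. destruct (p a) eqn:E; simpl; rewrite IHl; auto. rewrite H; auto; lra. Qed.

Lemma RL_perm l1 l2 f : Permutation l1 l2 -> Rsum_list l1 f = Rsum_list l2 f.
Proof. induction 1; simpl; auto; try lra. Qed.

Lemma RL_support l1 l2 f : NoDup l1 -> NoDup l2 ->
  (forall x, In x l1 -> ~ In x l2 -> f x = 0) -> (forall x, In x l2 -> ~ In x l1 -> f x = 0) ->
  Rsum_list l1 f = Rsum_list l2 f.
Proof.
  intros N1 N2 H1 H2.
  set (p2 := fun x => if in_dec ptdec x l2 then true else false).
  set (p1 := fun x => if in_dec ptdec x l1 then true else false).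
  rewrite (RL_filter l1 f p2), (RL_filter l2 f p1).
  - apply RL_perm. apply NoDup_Permutation; try (apply NoDup_filter; auto).
    intros x. rewrite !filter_In. unfold p1, p2.
    destruct (in_dec ptdec x l1), (in_dec ptdec x l2); intuition congruence.
  - intros x Hx. unfold p1. destruct (in_dec ptdec x l1); [discriminate|]. auto.
  - intros x Hx. unfold p2. destruct (in_dec ptdec x l2); [discriminate|]. auto.
Qed.

Lemma RL_sub l l' f : NoDup l -> NoDup l' -> incl l l' -> (forall x, In x l' -> 0 <= f x) ->
  Rsum_list l f <= Rsum_list l' f.
Proof.
  intros N N' I H.
  set (g := fun x => if in_dec ptdec x l then f x else 0).
  rewrite (RL_ext l f g) by (intros x Hx; unfold g; destruct (in_dec ptdec x l); tauto).
  rewrite (RL_support l l' g); auto.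
  - apply RL_le. intros x Hx; unfold g; destruct (in_dec ptdec x l); [lra|apply H; auto].
  - intros x Hx Hx'. exfalso; auto.
  - intros x _ Hx. unfold g; destruct (in_dec ptdec x l); tauto.
Qed.

Definition rip (D : nat) (u w : vec) : R := Rsum D (fun i => fst (u i) * fst (w i) + snd (u i) * snd (w i)).

Lemma Rsum_scal_r n f c : Rsum n f * c = Rsum n (fun i => f i * c).
Proof. rewrite Rmult_comm, <- Rsum_scal. apply Rsum_ext; intros; ring. Qed.

Lemma vnorm2_rip D u : vnorm2 D u = rip D u u.
Proof. unfold vnorm2, rip, Cnorm2. auto. Qed.
Lemma rip_sym D u w : rip D u w = rip D w u.
Proof. unfold rip; apply Rsum_ext; intros; ring. Qed.
Lemma rip_ext D u u' w w' : (forall i, (i < D)%nat -> u i = u' i) -> (forall i, (i < D)%nat -> w i = w' i) ->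
  rip D u w = rip D u' w'.
Proof. intros H1 H2; unfold rip; apply Rsum_ext; intros i Hi; rewrite H1, H2; auto. Qed.
Lemma rip_vadd_l D u v w : rip D (vadd u v) w = rip D u w + rip D v w.
Proof. unfold rip, vadd, Cadd; rewrite <- Rsum_plus; apply Rsum_ext; intros; simpl; ring. Qed.
Lemma rip_zero_l D u w : (forall i, (i < D)%nat -> u i = C0) -> rip D u w = 0.
Proof. intros H; unfold rip; apply Rsum_zero; intros i Hi; rewrite H by auto; simpl; ring. Qed.
Lemma rip_vsum_l D (S : list pt) g w : rip D (vsum_list S g) w = Rsum_list S (fun a => rip D (g a) w).
Proof.
  induction S; simpl.
  - apply rip_zero_l; auto.
  - change (fold_right (fun a v => vadd (g a) v) vzero S) with (vsum_list S g).
    rewrite rip_vadd_l, IHS; auto.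
Qed.
Lemma rip_nonneg D u : 0 <= rip D u u.
Proof. unfold rip; apply Rsum_nonneg; intros; nra. Qed.

Lemma Csum_ext n f g : (forall i, (i < n)%nat -> f i = g i) -> Csum n f = Csum n g.
Proof. induction n; simpl; intros H; auto. rewrite IHn by (intros; apply H; lia). rewrite H by lia. auto. Qed.

Lemma Rs_l n c f : c * Rsum n f = Rsum n (fun i => c * f i).
Proof. symmetry; apply Rsum_scal. Qed.
Lemma Rs_r n c f : Rsum n f * c = Rsum n (fun i => f i * c).
Proof. apply Rsum_scal_r. Qed.
Lemma Rs_p n f g : Rsum n f + Rsum n g = Rsum n (fun i => f i + g i).
Proof. symmetry; apply Rsum_plus. Qed.
Lemma Rs_m n f g : Rsum n f - Rsum n g = Rsum n (fun i => f i - g i).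
Proof. induction n; simpl; [ring|]. rewrite <- IHn; ring. Qed.
Ltac collapse := repeat (rewrite ?fst_Csum, ?snd_Csum, ?Rs_l, ?Rs_r, ?Rs_p, ?Rs_m).
Ltac sumring := collapse; apply Rsum_ext; intros; simpl; ring.

Lemma rip_adj D A u w : rip D (mat_vec D A u) w = rip D u (mat_vec D (adjoint A) w).
Proof.
  unfold rip, mat_vec, adjoint.
  transitivity (Rsum D (fun i => Rsum D (fun k =>
     (fst (A i k) * fst (u k) - snd (A i k) * snd (u k)) * fst (w i) +
     (fst (A i k) * snd (u k) + snd (A i k) * fst (u k)) * snd (w i)))).
  - apply Rsum_ext; intros i Hi. sumring.
  - rewrite Rsum_exchange. apply Rsum_ext; intros k Hk. sumring.
Qed.

Lemma mat_vec_ext D A v v' i : (forall k, (k < D)%nat -> v k = v' k) -> mat_vec D A v i = mat_vec D A v' i.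
Proof. intros H; unfold mat_vec; apply Csum_ext; intros; rewrite H; auto. Qed.
Lemma mat_vec_mext D A B v i : mat_eq D A B -> (i < D)%nat -> mat_vec D A v i = mat_vec D B v i.
Proof. intros H Hi; unfold mat_vec; apply Csum_ext; intros; rewrite H; auto. Qed.
Lemma mat_vec_mul D A B v i : mat_vec D (mat_mul D A B) v i = mat_vec D A (mat_vec D B v) i.
Proof.
  unfold mat_vec, mat_mul. apply Cx_eq.
  - rewrite !fst_Csum.
    transitivity (Rsum D (fun k => Rsum D (fun j =>
       (fst (A i j) * fst (B j k) - snd (A i j) * snd (B j k)) * fst (v k) -
       (fst (A i j) * snd (B j k) + snd (A i j) * fst (B j k)) * snd (v k)))).
    + apply Rsum_ext; intros k Hk; simpl. sumring.
    + rewrite Rsum_exchange. apply Rsum_ext; intros j Hj; simpl. sumring.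
  - rewrite !snd_Csum.
    transitivity (Rsum D (fun k => Rsum D (fun j =>
       (fst (A i j) * fst (B j k) - snd (A i j) * snd (B j k)) * snd (v k) +
       (fst (A i j) * snd (B j k) + snd (A i j) * fst (B j k)) * fst (v k)))).
    + apply Rsum_ext; intros k Hk; simpl. sumring.
    + rewrite Rsum_exchange. apply Rsum_ext; intros j Hj; simpl. sumring.
Qed.
Lemma mat_vec_id D v i : (i < D)%nat -> mat_vec D idmat v i = v i.
Proof.
  intros Hi. unfold mat_vec, idmat. apply Cx_eq; [rewrite fst_Csum|rewrite snd_Csum];
  rewrite (Rsum_single D _ i Hi); try (rewrite Nat.eqb_refl; simpl; ring);
  intros k Hk Hne; destruct (Nat.eqb_spec i k); try lia; simpl; ring.
Qed.
Lemma mat_vec_zero D A v i : (forall k, (k < D)%nat -> v k = C0) -> mat_vec D A v i = C0.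
Proof.
  intros H. unfold mat_vec. apply Cx_eq; [rewrite fst_Csum|rewrite snd_Csum]; simpl; apply Rsum_zero;
  intros k Hk; rewrite H by auto; simpl; ring.
Qed.
Lemma mat_vec_mzero D v i : mat_vec D mzero v i = C0.
Proof. unfold mat_vec, mzero. apply Cx_eq; [rewrite fst_Csum|rewrite snd_Csum]; simpl; apply Rsum_zero; intros; simpl; ring. Qed.
Lemma mat_vec_madd D A B v i : mat_vec D (madd A B) v i = Cadd (mat_vec D A v i) (mat_vec D B v i).
Proof. unfold mat_vec, madd, Cadd. apply Cx_eq; simpl; sumring. Qed.
Lemma mat_vec_msum D S P v i : mat_vec D (msum_list S P) v i = vsum_list S (fun a => mat_vec D (P a) v) i.
Proof.
  induction S; simpl.
  - apply mat_vec_mzero.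
  - rewrite mat_vec_madd. unfold vadd. f_equal. apply IHS.
Qed.
Lemma mat_vec_smul D A c v i : mat_vec D A (fun k => Cmul c (v k)) i = Cmul c (mat_vec D A v i).
Proof. unfold mat_vec, Cmul. apply Cx_eq; simpl; sumring. Qed.

Fixpoint zadd (x y : pt) : pt :=
  match x, y with
  | a :: x', b :: y' => (a + b)%Z :: zadd x' y'
  | _, _ => nil
  end.

Lemma len_zsub x y : length (zsub x y) = Nat.min (length x) (length y).
Proof. revert y; induction x; destruct y; simpl; auto. Qed.
Lemma len_zadd x y : length (zadd x y) = Nat.min (length x) (length y).
Proof. revert y; induction x; destruct y; simpl; auto. Qed.
Lemma zsub_pt d x y : is_pt d x -> is_pt d y -> is_pt d (zsub x y).
Proof. unfold is_pt; intros; rewrite len_zsub; lia. Qed.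
Lemma zadd_pt d x y : is_pt d x -> is_pt d y -> is_pt d (zadd x y).
Proof. unfold is_pt; intros; rewrite len_zadd; lia. Qed.
Lemma zsub_zadd x a : length x = length a -> zsub (zadd x a) a = x.
Proof. revert a; induction x as [|h x IH]; intros [|b a]; simpl; intros H; try discriminate; auto; f_equal; [lia|apply IH; simpl in *; lia]. Qed.
Lemma zadd_zsub x a : length x = length a -> zadd (zsub x a) a = x.
Proof. revert a; induction x as [|h x IH]; intros [|b a]; simpl; intros H; try discriminate; auto; f_equal; [lia|apply IH; simpl in *; lia]. Qed.
Lemma zadd_zsub_comm x a y : length x = length a -> length y = length a -> zadd (zsub x a) y = zsub (zadd x y) a.
Proof. revert a y; induction x as [|h x IH]; intros [|b a] [|c y]; simpl; intros H1 H2; try discriminate; auto; f_equal; [lia|apply IH; simpl in *; lia]. Qed.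
Lemma zadd_origin d y : is_pt d y -> zadd (origin d) y = y.
Proof. unfold is_pt, origin. revert d; induction y; destruct d; simpl; intros H; try discriminate; auto. f_equal; auto. Qed.
Lemma origin_pt d : is_pt d (origin d).
Proof. unfold is_pt, origin. apply repeat_length. Qed.

Lemma NoDup_map_on (t : pt -> pt) l : NoDup l -> (forall x y, In x l -> In y l -> t x = t y -> x = y) -> NoDup (map t l).
Proof.
  induction l; simpl; intros N H; constructor; inversion N; subst.
  - intros Hin. apply in_map_iff in Hin. destruct Hin as [y [E Hy]].
    assert (y = a) by (apply H; auto). subst; contradiction.
  - apply IHl; auto.
Qed.

Definition lat (d : nat) (L : list pt) : Prop := NoDup L /\ forall x, In x L -> is_pt d x.

Definition expand (S L : list pt) : list pt := nodup ptdec (flat_map (fun x => map (fun a => zadd x a) S) L).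
Lemma expand_lat d S L : (forall a, In a S -> is_pt d a) -> lat d L -> lat d (expand S L).
Proof.
  intros HS [N HL]. split; [apply NoDup_nodup|]. intros y Hy. unfold expand in Hy.
  apply nodup_In, in_flat_map in Hy. destruct Hy as [x [Hx Hy]]. apply in_map_iff in Hy.
  destruct Hy as [a [<- Ha]]. apply zadd_pt; auto.
Qed.
Lemma expand_in S L x a : In x L -> In a S -> In (zadd x a) (expand S L).
Proof. intros. unfold expand. apply nodup_In, in_flat_map. exists x; split; auto. apply in_map; auto. Qed.

Definition shrink (S L : list pt) : list pt := nodup ptdec (flat_map (fun x => map (fun a => zsub x a) S) L).
Lemma shrink_lat d S L : (forall a, In a S -> is_pt d a) -> lat d L -> lat d (shrink S L).
Proof.
  intros HS [N HL]. split; [apply NoDup_nodup|]. intros y Hy. unfold shrink in Hy.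
  apply nodup_In, in_flat_map in Hy. destruct Hy as [x [Hx Hy]]. apply in_map_iff in Hy.
  destruct Hy as [a [<- Ha]]. apply zsub_pt; auto.
Qed.
Lemma shrink_in S L x a : In x L -> In a S -> In (zsub x a) (shrink S L).
Proof. intros. unfold shrink. apply nodup_In, in_flat_map. exists x; split; auto. apply in_map; auto. Qed.

Definition supp_in (d D : nat) (h : field) (L : list pt) : Prop :=
  forall x, is_pt d x -> ~ In x L -> forall i, (i < D)%nat -> h x i = C0.

Lemma vsum_zero (S : list pt) g i : (forall a, In a S -> g a i = C0) -> vsum_list S g i = C0.
Proof.
  induction S; simpl; intros H; auto. unfold vadd at 1.
  change (fold_right (fun a v => vadd (g a) v) vzero S) with (vsum_list S g).
  rewrite IHS, H by auto. apply Cx_eq; simpl; ring.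
Qed.
Lemma vsum_ext (S : list pt) g g' i : (forall a, In a S -> g a i = g' a i) -> vsum_list S g i = vsum_list S g' i.
Proof.
  induction S; simpl; intros H; auto. unfold vadd.
  change (fold_right (fun a v => vadd (g a) v) vzero S) with (vsum_list S g).
  change (fold_right (fun a v => vadd (g' a) v) vzero S) with (vsum_list S g').
  rewrite IHS, H by auto. auto.
Qed.

Lemma U_supp d D S P Cm h L : (forall a, In a S -> is_pt d a) -> supp_in d D h L ->
  supp_in d D (U_op D S P Cm h) (expand S L).
Proof.
  intros HS Hh x Hx Hnot i Hi. unfold U_op. apply vsum_zero. intros a Ha.
  apply mat_vec_zero. intros k Hk. apply mat_vec_zero. intros k' Hk'.
  apply Hh; auto. apply zsub_pt; auto.
  intros Hin. apply Hnot. rewrite <- (zadd_zsub x a). apply expand_in; auto.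
  unfold is_pt in *. rewrite Hx, HS; auto.
Qed.

Lemma proj_sa D Q w z : mat_eq D (adjoint Q) Q -> rip D (mat_vec D Q w) z = rip D w (mat_vec D Q z).
Proof. intros H. rewrite rip_adj. apply rip_ext; auto. intros; apply mat_vec_mext; auto. Qed.

Lemma pt_iso D (S : list pt) P u v : is_resolution D S P -> NoDup S ->
  rip D (vsum_list S (fun a => mat_vec D (P a) (u a))) (vsum_list S (fun b => mat_vec D (P b) (v b)))
  = Rsum_list S (fun a => rip D (mat_vec D (P a) (u a)) (v a)).
Proof.
  intros [Hp [Ho Hs]] N. rewrite rip_vsum_l. apply RL_ext. intros a Ha.
  rewrite rip_sym, rip_vsum_l. rewrite (RL_single S _ a N Ha).
  - destruct (Hp a Ha) as [Hid Hsa]. rewrite proj_sa by auto. rewrite rip_sym. apply rip_ext; auto.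
    intros i Hi. rewrite <- mat_vec_mul. apply mat_vec_mext; auto.
  - intros b Hb Hne. destruct (Hp b Hb) as [Hid Hsa]. rewrite proj_sa by auto.
    rewrite rip_sym. apply rip_zero_l. intros i Hi. rewrite <- mat_vec_mul.
    rewrite (mat_vec_mext D _ mzero); auto. apply mat_vec_mzero.
Qed.

Lemma sumP D (S : list pt) P y z : is_resolution D S P ->
  Rsum_list S (fun a => rip D (mat_vec D (P a) y) z) = rip D y z.
Proof.
  intros [_ [_ Hs]]. rewrite <- rip_vsum_l. apply rip_ext; auto. intros i Hi.
  rewrite <- mat_vec_msum. rewrite (mat_vec_mext D _ idmat); auto. apply mat_vec_id; auto.
Qed.

Lemma unit_rip D Cm w z : unitary D Cm -> rip D (mat_vec D Cm w) (mat_vec D Cm z) = rip D w z.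
Proof.
  intros [H1 _]. rewrite rip_adj. apply rip_ext; auto. intros i Hi.
  rewrite <- mat_vec_mul, (mat_vec_mext D _ idmat); auto. apply mat_vec_id; auto.
Qed.

Lemma U_iso d D S P Cm h k L L' : finite_subset d S -> is_resolution D S P -> unitary D Cm ->
  lat d L -> lat d L' -> (forall x a, In x L -> In a S -> In (zadd x a) L') -> supp_in d D h L ->
  Rsum_list L' (fun x => rip D (U_op D S P Cm h x) (U_op D S P Cm k x)) = Rsum_list L (fun z => rip D (h z) (k z)).
Proof.
  intros [NS HS] Hr Hu [NL HL] [NL' HL'] Hin Hh. rewrite Forall_forall in HS.
  unfold U_op.
  set (F := fun a z => rip D (mat_vec D (P a) (mat_vec D Cm (h z))) (mat_vec D Cm (k z))).
  transitivity (Rsum_list L' (fun x => Rsum_list S (fun a => F a (zsub x a)))).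
  { apply RL_ext; intros x Hx. apply pt_iso; auto. }
  rewrite RL_exchange.
  transitivity (Rsum_list S (fun a => Rsum_list L (fun z => F a z))).
  - apply RL_ext; intros a Ha. rewrite <- (RL_map L' (fun x => zsub x a) (F a)).
    apply RL_support; auto.
    + apply NoDup_map_on; auto. intros x y Hx Hy E.
      rewrite <- (zadd_zsub x a), <- (zadd_zsub y a), E; [auto| |]; rewrite ?(HL' _ Hx), ?(HL' _ Hy), (HS _ Ha); auto.
    + intros z Hz Hnz. apply in_map_iff in Hz. destruct Hz as [x [<- Hx]].
      unfold F. apply rip_zero_l. intros i Hi. apply mat_vec_zero. intros j Hj. apply mat_vec_zero.
      intros l Hl. apply Hh; auto. apply zsub_pt; auto.
    + intros z Hz Hnz. exfalso. apply Hnz. apply in_map_iff. exists (zadd z a). split.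
      * apply zsub_zadd. unfold is_pt in *; rewrite HL, HS; auto.
      * apply Hin; auto.
  - rewrite RL_exchange. apply RL_ext; intros z Hz. unfold F. rewrite sumP by auto. apply unit_rip; auto.
Qed.

Definition Nm (D : nat) (L : list pt) (f : field) : R := Rsum_list L (fun x => vnorm2 D (f x)).

Lemma vnorm2_ext D u v : (forall i, (i < D)%nat -> u i = v i) -> vnorm2 D u = vnorm2 D v.
Proof. intros H; rewrite !vnorm2_rip; apply rip_ext; auto. Qed.
Lemma vnorm2_cmul D c v : vnorm2 D (fun i => Cmul c (v i)) = Cnorm2 c * vnorm2 D v.
Proof. unfold vnorm2. rewrite <- Rsum_scal. apply Rsum_ext; intros; unfold Cnorm2, Cmul; simpl; ring. Qed.
Lemma vnorm2_nonneg D v : 0 <= vnorm2 D v.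
Proof. rewrite vnorm2_rip; apply rip_nonneg. Qed.
Lemma Cnorm2_pos z : z <> C0 -> 0 < Cnorm2 z.
Proof.
  destruct z as [a b]; unfold Cnorm2; simpl; intros H.
  destruct (Req_dec a 0), (Req_dec b 0); subst; try (exfalso; apply H; reflexivity); nra.
Qed.
Lemma Rsum_ge_term n f j : (j < n)%nat -> (forall i, (i < n)%nat -> 0 <= f i) -> f j <= Rsum n f.
Proof.
  induction n; intros Hj H; [lia|simpl]. destruct (Nat.eq_dec j n).
  - subst. assert (0 <= Rsum n f) by (apply Rsum_nonneg; intros; apply H; lia). lra.
  - assert (f j <= Rsum n f) by (apply IHn; try lia; intros; apply H; lia). assert (0 <= f n) by (apply H; lia). lra.
Qed.
Lemma vnorm2_pos D v : vnonzero D v -> 0 < vnorm2 D v.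
Proof.
  intros [i [Hi Hv]]. unfold vnorm2. eapply Rlt_le_trans; [apply (Cnorm2_pos _ Hv)|].
  apply (Rsum_ge_term D (fun i => Cnorm2 (v i))); auto. intros; unfold Cnorm2; nra.
Qed.

Lemma in_l2_lat d D f M : (forall xs, NoDup xs -> Forall (is_pt d) xs -> Rsum_list xs (fun x => vnorm2 D (f x)) <= M) ->
  forall L, lat d L -> Nm D L f <= M.
Proof. intros H L [N HL]. apply H; auto. apply Forall_forall; auto. Qed.

Lemma U_ext D S P Cm h h' x i : (forall a, In a S -> forall k, (k < D)%nat -> h (zsub x a) k = h' (zsub x a) k) ->
  U_op D S P Cm h x i = U_op D S P Cm h' x i.
Proof.
  intros H. unfold U_op. apply vsum_ext. intros a Ha. apply mat_vec_ext. intros k Hk.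
  apply mat_vec_ext. intros; apply H; auto.
Qed.

Lemma step d D S P Cm f lam F : finite_subset d S -> is_resolution D S P -> unitary D Cm ->
  (forall x, is_pt d x -> forall i, (i < D)%nat -> U_op D S P Cm f x i = Cmul lam (f x i)) ->
  lat d F -> Cnorm2 lam * Nm D F f <= Nm D (shrink S F) f.
Proof.
  intros HSf Hr Hu Heig HF.
  assert (HS : forall a, In a S -> is_pt d a) by (destruct HSf as [_ HS]; rewrite Forall_forall in HS; auto).
  set (G := shrink S F).
  assert (HG : lat d G) by (apply shrink_lat; auto).
  set (h := fun x => if in_dec ptdec x G then f x else vzero).
  assert (Hh : supp_in d D h G). { intros x _ Hx i Hi. unfold h. destruct (in_dec ptdec x G); tauto. }
  set (L' := nodup ptdec (F ++ expand S G)).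
  assert (HL' : lat d L').
  { split; [apply NoDup_nodup|]. intros x Hx. apply nodup_In, in_app_iff in Hx. destruct Hx as [Hx|Hx].
    - apply HF; auto.
    - apply (expand_lat d S G HS HG); auto. }
  unfold Nm. rewrite <- RL_scal.
  transitivity (Rsum_list F (fun x => vnorm2 D (U_op D S P Cm h x))).
  { apply Req_le. apply RL_ext. intros x Hx. rewrite <- vnorm2_cmul. apply vnorm2_ext. intros i Hi.
    rewrite <- Heig by (auto; apply HF; auto). apply U_ext. intros a Ha k Hk. unfold h.
    destruct (in_dec ptdec (zsub x a) G) as [_|n]; auto. exfalso; apply n. apply shrink_in; auto. }
  eapply Rle_trans.
  { apply (RL_sub F L'). apply HF. apply HL'. intros x Hx. apply nodup_In, in_app_iff; auto.
    intros; apply vnorm2_nonneg. }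
  apply Req_le.
  transitivity (Rsum_list L' (fun x => rip D (U_op D S P Cm h x) (U_op D S P Cm h x))).
  { apply RL_ext; intros; apply vnorm2_rip. }
  rewrite (U_iso d D S P Cm h h G L'); auto.
  - apply RL_ext; intros x Hx. rewrite <- vnorm2_rip. unfold h. destruct (in_dec ptdec x G); tauto.
  - intros x a Hx Ha. apply nodup_In, in_app_iff. right. apply expand_in; auto.
Qed.

Lemma bernoulli q n : 1 <= q -> 1 + INR n * (q - 1) <= q ^ n.
Proof.
  intros Hq. induction n; simpl pow; [simpl; lra|]. rewrite S_INR.
  assert (0 <= INR n) by apply pos_INR. assert (0 <= INR n * ((q-1)*(q-1))) by (apply Rmult_le_pos; nra). nra.
Qed.

Lemma lam_le1 d D S P Cm f lam M x1 : finite_subset d S -> is_resolution D S P -> unitary D Cm ->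
  (forall x, is_pt d x -> forall i, (i < D)%nat -> U_op D S P Cm f x i = Cmul lam (f x i)) ->
  (forall L, lat d L -> Nm D L f <= M) -> is_pt d x1 -> vnonzero D (f x1) -> Cnorm2 lam <= 1.
Proof.
  intros HSf Hr Hu Heig HM Hx1 Hnz.
  assert (HS : forall a, In a S -> is_pt d a) by (destruct HSf as [_ HS]; rewrite Forall_forall in HS; auto).
  assert (It : forall n F, lat d F -> Cnorm2 lam ^ n * Nm D F f <= M).
  { induction n; intros F HF; simpl.
    - rewrite Rmult_1_l; auto.
    - assert (0 <= Cnorm2 lam) by (unfold Cnorm2; nra).
      assert (Cnorm2 lam * Nm D F f <= Nm D (shrink S F) f) by (apply (step d D S P Cm); auto).
      assert (Cnorm2 lam ^ n * Nm D (shrink S F) f <= M) by (apply IHn; apply shrink_lat; auto).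
      assert (0 <= Cnorm2 lam ^ n) by (apply pow_le; auto). nra. }
  set (c := Nm D (x1 :: nil) f).
  assert (Hc : 0 < c) by (unfold c, Nm; simpl; pose proof (vnorm2_pos D _ Hnz); lra).
  assert (HF1 : lat d (x1 :: nil)) by (split; [repeat constructor; simpl; tauto| simpl; intros x [<-|[]]; auto]).
  destruct (Rle_or_lt (Cnorm2 lam) 1) as [H|H]; auto. exfalso.
  assert (Hc0 : c <= M) by (pose proof (It O _ HF1); simpl in *; unfold c; lra).
  destruct (archimed (M / (c * (Cnorm2 lam - 1)))) as [Ha _].
  set (n := Z.to_nat (up (M / (c * (Cnorm2 lam - 1))))).
  assert (Hn : M / (c * (Cnorm2 lam - 1)) < INR n).
  { unfold n. rewrite INR_IZR_INZ. rewrite Z2Nat.id; auto. apply le_IZR.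
    assert (0 <= M / (c * (Cnorm2 lam - 1))) by (unfold Rdiv; apply Rmult_le_pos; [lra|apply Rlt_le, Rinv_0_lt_compat; nra]). lra. }
  pose proof (It n _ HF1). pose proof (bernoulli (Cnorm2 lam) n ltac:(lra)).
  assert (M < INR n * (c * (Cnorm2 lam - 1))).
  { apply (Rmult_lt_compat_r (c * (Cnorm2 lam - 1))) in Hn; [|nra].
    unfold Rdiv in Hn. rewrite Rmult_assoc, Rinv_l in Hn by nra. lra. }
  fold c in H0. nra.
Qed.

Lemma vsum_cmul (S : list pt) c g i : vsum_list S (fun a j => Cmul c (g a j)) i = Cmul c (vsum_list S g i).
Proof.
  induction S; simpl.
  - apply Cx_eq; unfold Cmul; simpl; ring.
  - unfold vadd.
    change (fold_right (fun a v => vadd (fun j => Cmul c (g a j)) v) vzero S) with (vsum_list S (fun a j => Cmul c (g a j))).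
    change (fold_right (fun a v => vadd (g a) v) vzero S) with (vsum_list S g).
    rewrite IHS. apply Cx_eq; unfold Cmul, Cadd; simpl; ring.
Qed.

Lemma U_smul D S P Cm c h x i : U_op D S P Cm (fun y j => Cmul c (h y j)) x i = Cmul c (U_op D S P Cm h x i).
Proof.
  unfold U_op. rewrite <- vsum_cmul. apply vsum_ext. intros a Ha.
  rewrite <- mat_vec_smul. apply mat_vec_ext. intros k Hk. apply mat_vec_smul.
Qed.

Definition Cpow (lam : Cx) (n : nat) : Cx := Nat.iter n (Cmul lam) Defs.C1.
Lemma Cnorm2_mul a b : Cnorm2 (Cmul a b) = Cnorm2 a * Cnorm2 b.
Proof. unfold Cnorm2, Cmul; simpl; ring. Qed.
Lemma Cnorm2_pow lam n : Cnorm2 (Cpow lam n) = Cnorm2 lam ^ n.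
Proof. induction n; simpl. - unfold Cnorm2, Defs.C1; simpl; ring. - rewrite Cnorm2_mul. fold (Cpow lam n). rewrite IHn; auto. Qed.
Lemma pow_le1 q n : 0 <= q -> q <= 1 -> q ^ n <= 1.
Proof. intros. induction n; simpl; [lra|]. assert (0 <= q ^ n) by (apply pow_le; auto). nra. Qed.

Lemma rip_bound D u w t : 0 < t -> 2 * t * rip D u w <= t * t * rip D u u + rip D w w.
Proof.
  intros Ht. unfold rip. rewrite !Rs_l, Rs_p. apply Rsum_le. intros i Hi.
  pose proof (Rle_0_sqr (t * fst (u i) - fst (w i))); pose proof (Rle_0_sqr (t * snd (u i) - snd (w i))); unfold Rsqr in *; nra.
Qed.
Lemma rip_bound4 D u w : rip D u w <= / 4 * rip D u u + rip D w w.
Proof. pose proof (rip_bound D u w (/2) ltac:(lra)). lra. Qed.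

Lemma RL_split l f (p : pt -> bool) : Rsum_list l f = Rsum_list (filter p l) f + Rsum_list (filter (fun x => negb (p x)) l) f.
Proof. induction l; simpl; [lra|]. destruct (p a); simpl; rewrite IHl; lra. Qed.

Lemma RL_lt_const (l : list pt) f b : l <> nil -> (forall x, In x l -> f x < b) -> Rsum_list l f < INR (length l) * b.
Proof.
  induction l as [|y l IH]; intros Hn H; [congruence|]. simpl.
  destruct l as [|z l'].
  - simpl. specialize (H y (or_introl eq_refl)). lra.
  - assert (f y < b) by (apply H; simpl; auto).
    assert (Rsum_list (z :: l') f < INR (length (z :: l')) * b) by (apply IH; [congruence|intros; apply H; simpl; auto]).
    simpl Rsum_list in *. simpl length in *. rewrite S_INR in *. simpl INR. destruct (length l'); lra.
Qed.

Lemma RL_avg (l : list pt) f A : 0 < A -> A <= Rsum_list l f -> exists x, In x l /\ A / INR (length l) <= f x.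
Proof.
  intros HA Hs. apply NNPP. intros Hn.
  assert (Hall : forall x, In x l -> f x < A / INR (length l)).
  { intros x Hx. apply Rnot_le_lt. intro. apply Hn. exists x; auto. }
  destruct l as [|y l']. { simpl in Hs. lra. }
  pose proof (RL_lt_const (y :: l') f _ ltac:(congruence) Hall).
  unfold Rdiv in H. rewrite (Rmult_comm A), <- Rmult_assoc, Rinv_r in H by (apply not_0_INR; simpl; lia). lra.
Qed.

Lemma pigeon (F : list pt) (h : nat -> pt -> R) eps :
  (forall n, exists x, In x F /\ eps <= h n x) ->
  exists x, In x F /\ forall N, exists n, (N <= n)%nat /\ eps <= h n x.
Proof.
  intros Hn. apply NNPP; intro Hno.
  assert (Hall : forall x, In x F -> exists N, forall n, (N <= n)%nat -> h n x < eps).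
  { intros x Hx. apply NNPP; intro H1. apply Hno. exists x; split; auto. intro N. apply NNPP; intro H2.
    apply H1. exists N. intros n Hn'. apply Rnot_le_lt. intro H3. apply H2. exists n; auto. }
  assert (HN : exists N, forall x, In x F -> forall n, (N <= n)%nat -> h n x < eps).
  { clear Hn Hno. induction F as [|y F IH].
    - exists 0%nat; intros x [].
    - destruct IH as [N1 H1]. { intros; apply Hall; simpl; auto. }
      destruct (Hall y (or_introl eq_refl)) as [N2 H2]. exists (max N1 N2).
      intros x [<-|Hx] n Hn. + apply H2; lia. + apply H1; auto; lia. }
  destruct HN as [N HN]. destruct (Hn N) as [x [Hx He]]. specialize (HN x Hx N (le_n N)). lra.
Qed.

Lemma lat_single d x : is_pt d x -> lat d (x :: nil).
Proof. intros H. split; [repeat constructor; simpl; tauto|simpl; intros y [<-|[]]; auto]. Qed.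

Theorem lemma2p2 (d D : nat) (S : list pt) (P : pt -> mat) (Cm : mat) :
  finite_subset d S ->
  is_resolution D S P ->
  unitary D Cm ->
  (exists lam : Cx, is_eigenvalue d D S P Cm lam) ->
  exists (phi : vec) (xo : pt),
    vnonzero D phi /\ is_pt d xo /\
    limsup_pos (fun n => p_n d D S P Cm n phi xo).
Proof.
  intros HSf Hr Hu [lam [f [[M HM] [[x1 [Hx1 Hnz]] Heig]]]].
  assert (HS : forall a, In a S -> is_pt d a) by (destruct HSf as [_ HS]; rewrite Forall_forall in HS; auto).
  assert (HMl : forall L, lat d L -> Nm D L f <= M) by (apply in_l2_lat; auto).
  assert (Hq : Cnorm2 lam <= 1) by (eapply lam_le1; eauto).
  assert (Hq0 : 0 <= Cnorm2 lam) by (unfold Cnorm2; nra).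
  set (f' := fun x => f (zadd x x1)).
  assert (Heig' : forall x, is_pt d x -> forall i, (i < D)%nat -> U_op D S P Cm f' x i = Cmul lam (f' x i)).
  { intros x Hx i Hi. unfold f'. rewrite <- Heig by (auto; apply zadd_pt; auto).
    unfold U_op. apply vsum_ext. intros a Ha. apply mat_vec_ext; intros k Hk. apply mat_vec_ext; intros j Hj.
    rewrite zadd_zsub_comm; auto; unfold is_pt in *; rewrite ?Hx, ?Hx1, (HS a Ha); auto. }
  assert (HMl' : forall L, lat d L -> Nm D L f' <= M).
  { intros L [NL HL].
    assert (E : Rsum_list (map (fun x => zadd x x1) L) (fun y => vnorm2 D (f y)) = Nm D L f')
      by (rewrite RL_map; reflexivity).
    rewrite <- E. apply HMl. split.
    - apply NoDup_map_on; auto. intros x y Hx Hy E'.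
      rewrite <- (zsub_zadd x x1), <- (zsub_zadd y x1), E'; auto;
      unfold is_pt in *; rewrite ?(HL _ Hx), ?(HL _ Hy), Hx1; auto.
    - intros y Hy. apply in_map_iff in Hy. destruct Hy as [x [<- Hx]]. apply zadd_pt; auto. }
  set (phi := f' (origin d)).
  assert (Hphi : forall i, phi i = f x1 i) by (intro; unfold phi, f'; rewrite zadd_origin; auto).
  assert (Hnzphi : vnonzero D phi) by (destruct Hnz as [i [Hi Hv]]; exists i; rewrite Hphi; auto).
  set (c := vnorm2 D phi). assert (Hc : 0 < c) by (apply vnorm2_pos; auto).
  assert (Hc1 : Nm D (origin d :: nil) f' = c) by (unfold Nm, c, phi; simpl; ring).
  assert (HcM : c <= M) by (rewrite <- Hc1; apply HMl', lat_single, origin_pt).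
  set (E := fun r => exists L, lat d L /\ r = Nm D L f').
  destruct (completeness E) as [Ms [Hub Hlub]].
  { exists M. intros r [L [HL ->]]. apply HMl'; auto. }
  { exists 0. exists nil. split; [split; [constructor|simpl; tauto]|reflexivity]. }
  set (eta := c / 4).
  assert (HcMs : c <= Ms) by (rewrite <- Hc1; apply Hub; exists (origin d :: nil); split; auto; apply lat_single, origin_pt).
  assert (HF : exists F, lat d F /\ Ms - eta < Nm D F f').
  { apply NNPP; intro Hn. assert (Ms <= Ms - eta).
    { apply Hlub. intros r [L [HL ->]]. apply Rnot_lt_le. intro. apply Hn. exists L; auto. }
    unfold eta in *; lra. }
  destruct HF as [F [HFl HFs]].
  assert (Htail : forall L, lat d L -> (forall x, In x L -> ~ In x F) -> Nm D L f' <= eta).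
  { intros L [NL HL] Hdis.
    assert (HFL : lat d (F ++ L)).
    { split. - apply NoDup_app; auto. apply HFl. intros a Ha Hb; apply (Hdis a Hb Ha).
      - intros x Hx; apply in_app_iff in Hx; destruct Hx; [apply HFl|apply HL]; auto. }
    assert (Nm D (F ++ L) f' <= Ms) by (apply Hub; exists (F ++ L); auto).
    unfold Nm in *; rewrite RL_app in H. lra. }
  assert (HFne : (0 < length F)%nat).
  { destruct F; simpl; [|lia]. unfold Nm in HFs; simpl in HFs. unfold eta in *; lra. }
  set (g := fun n => Nat.iter n (U_op D S P Cm) (delta0 d phi)).
  set (Ln := fun n => Nat.iter n (expand S) (origin d :: nil)).
  set (k := fun n x i => Cmul (Cpow lam n) (f' x i)).
  assert (HLn : forall n, lat d (Ln n)).
  { induction n. - apply lat_single, origin_pt. - change (Ln (Datatypes.S n)) with (expand S (Ln n)). apply expand_lat; auto. }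
  assert (Hsupp : forall n, supp_in d D (g n) (Ln n)).
  { induction n.
    - intros x Hx Hnot i Hi. change (g 0%nat) with (delta0 d phi). unfold delta0.
      destruct (list_eq_dec Z.eq_dec x (origin d)). + exfalso; apply Hnot; left; auto. + reflexivity.
    - change (g (Datatypes.S n)) with (U_op D S P Cm (g n)). change (Ln (Datatypes.S n)) with (expand S (Ln n)). apply U_supp; auto. }
  assert (Hk : forall n x, is_pt d x -> forall i, (i < D)%nat -> U_op D S P Cm (k n) x i = k (Datatypes.S n) x i).
  { intros n x Hx i Hi. unfold k. rewrite U_smul, Heig' by auto. apply Cx_eq; unfold Cpow; simpl; ring. }
  assert (Hkb : forall n x, vnorm2 D (k n x) <= vnorm2 D (f' x)).
  { intros n x. unfold k. rewrite vnorm2_cmul, Cnorm2_pow.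
    pose proof (pow_le1 _ n Hq0 Hq). pose proof (vnorm2_nonneg D (f' x)). pose proof (pow_le _ n Hq0). nra. }
  assert (Hinv : forall n, Rsum_list (Ln n) (fun x => rip D (g n x) (k n x)) = c).
  { induction n.
    - change (Ln 0%nat) with (origin d :: nil). simpl. change (g 0%nat) with (delta0 d phi). unfold delta0.
      destruct (list_eq_dec Z.eq_dec (origin d) (origin d)); [|congruence].
      rewrite Rplus_0_r. unfold c. rewrite vnorm2_rip. apply rip_ext; auto. intros i Hi.
      unfold k, phi. apply Cx_eq; unfold Cpow; simpl; ring.
    - rewrite <- IHn. change (Ln (Datatypes.S n)) with (expand S (Ln n)).
      rewrite <- (U_iso d D S P Cm (g n) (k n) (Ln n) (expand S (Ln n))); auto.
      + apply RL_ext. intros x Hx. apply rip_ext; auto. intros i Hi. symmetry; apply Hk; auto.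
        apply (expand_lat d S (Ln n) HS (HLn n)); auto.
      + apply expand_lat; auto.
      + intros; apply expand_in; auto. }
  assert (Hnorm : forall n, Rsum_list (Ln n) (fun x => rip D (g n x) (g n x)) = c).
  { induction n.
    - change (Ln 0%nat) with (origin d :: nil). simpl. change (g 0%nat) with (delta0 d phi). unfold delta0.
      destruct (list_eq_dec Z.eq_dec (origin d) (origin d)); [|congruence].
      rewrite Rplus_0_r. unfold c. rewrite vnorm2_rip. auto.
    - rewrite <- IHn. change (Ln (Datatypes.S n)) with (expand S (Ln n)).
      rewrite <- (U_iso d D S P Cm (g n) (g n) (Ln n) (expand S (Ln n))); auto.
      + apply expand_lat; auto.
      + intros; apply expand_in; auto. }
  set (a := c / 2 / INR (length F)).
  assert (Ha : 0 < a).
  { unfold a. unfold Rdiv. apply Rmult_lt_0_compat; [lra|]. apply Rinv_0_lt_compat, lt_0_INR; auto. }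
  set (eps := 3 * (a * a) / (4 * M)).
  assert (Heps : 0 < eps).
  { unfold eps, Rdiv. apply Rmult_lt_0_compat; [nra|]. apply Rinv_0_lt_compat; lra. }
  assert (Hn : forall n, exists x, In x F /\ eps <= vnorm2 D (g n x)).
  { intro n.
    set (r := fun x => rip D (g n x) (k n x)).
    set (p := fun x => if in_dec ptdec x F then true else false).
    assert (Hi : Rsum_list (Ln n) r = c) by apply Hinv.
    rewrite (RL_split _ _ p) in Hi.
    assert (H1 : Rsum_list (filter p (Ln n)) r = Rsum_list F r).
    { apply RL_support. - apply NoDup_filter, HLn. - apply HFl.
      - intros x Hx Hnx. apply filter_In in Hx. destruct Hx as [_ Hp]. unfold p in Hp.
        destruct (in_dec ptdec x F); [contradiction|discriminate].
      - intros x Hx Hnx. unfold r. apply rip_zero_l. intros i Hi'. apply (Hsupp n); auto. apply HFl; auto.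
        intro Hin. apply Hnx. apply filter_In. split; auto. unfold p. destruct (in_dec ptdec x F); tauto. }
    set (T := filter (fun x => negb (p x)) (Ln n)) in *.
    assert (HT : lat d T).
    { split; [apply NoDup_filter, HLn|]. intros x Hx; apply filter_In in Hx. apply (HLn n). tauto. }
    assert (HTdis : forall x, In x T -> ~ In x F).
    { intros x Hx Hin. apply filter_In in Hx. destruct Hx as [_ Hp]. unfold p in Hp.
      destruct (in_dec ptdec x F); simpl in Hp; [discriminate|contradiction]. }
    assert (H2 : Rsum_list T r <= / 4 * c + eta).
    { eapply Rle_trans. { apply RL_le. intros x _. apply rip_bound4. }
      rewrite RL_plus, RL_scal.
      assert (Rsum_list T (fun x => rip D (g n x) (g n x)) <= c).
      { rewrite <- (Hnorm n). apply RL_sub.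
        - apply HT. - apply HLn. - intros x Hx. apply filter_In in Hx; tauto.
        - intros; apply rip_nonneg. }
      assert (Rsum_list T (fun x => rip D (k n x) (k n x)) <= eta).
      { eapply Rle_trans; [|apply (Htail T HT HTdis)]. unfold Nm. apply RL_le. intros x _.
        rewrite <- vnorm2_rip. apply Hkb. }
      lra. }
    assert (H3 : c / 2 <= Rsum_list F r). { unfold eta in *. unfold pt in *. lra. }
    destruct (RL_avg F r (c / 2) ltac:(lra) H3) as [x [HxF Hrx]].
    exists x; split; auto. fold a in Hrx. unfold r in Hrx.
    assert (Hkx : rip D (k n x) (k n x) <= M).
    { rewrite <- vnorm2_rip. eapply Rle_trans; [apply Hkb|].
      pose proof (HMl' (x :: nil) (lat_single d x (proj2 HFl x HxF))). unfold Nm in H; simpl in H. lra. }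
    set (t := 2 * M / a).
    assert (Ht : 0 < t) by (unfold t, Rdiv; apply Rmult_lt_0_compat; [lra|apply Rinv_0_lt_compat; lra]).
    pose proof (rip_bound D (g n x) (k n x) t Ht) as Hb.
    assert (Hta : t * a = 2 * M) by (unfold t; field; lra).
    assert (Hg : 3 * M <= t * t * rip D (g n x) (g n x)) by nra.
    assert (Het : eps * (t * t) = 3 * M) by (unfold eps, t; field; lra).
    rewrite vnorm2_rip. apply (Rmult_le_reg_r (t * t)); [nra|]. lra. }
  destruct (pigeon F (fun n x => vnorm2 D (g n x)) eps Hn) as [x [HxF Hx]].
  exists phi, x. split; [auto|split; [apply HFl; auto|]].
  exists eps. split; auto.
Qed.
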